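(* Let $X$, $Z$ be topological vector spaces, $C\subseteq Z$ a nonempty closed convex cone with $C^-\neq\{0\}$, and $f:X\to\mathcal{F}(Z,C)$ convex. If $f$ is lattice-bounded above on some neighborhood of $x_0\in X$, then $f$ is upper lattice-semicontinuous at $x_0$.
   Context: $\mathcal{F}(Z,C)=\{A\subseteq Z\colon A=\operatorname{cl}(A+C)\}$ (empty set included); $C^-=\{z^*\in Z^*\colon z^*(z)\le0\ \forall z\in C\}$. $f$ is convex iff $tf(x_1)+(1-t)f(x_2)\subseteq f(tx_1+(1-t)x_2)$ for all $x_1,x_2\in X$, $t\in(0,1)$. $f$ is lattice-bounded above on $M\subseteq X$ iff there is $a\in Z$ with $a\in f(x)$ for all $x\in M$. $f$ is upper lattice-semicontinuous at $x_0$ iff $f(x_0)\subseteq\operatorname{cl}\bigcup_{U\in\mathcal{N}(x_0)}\bigcap_{x\in U}f(x)$ ($\mathcal{N}(x_0)$ the neighborhoods of $x_0$); equivalently, for every $z_0\in f(x_0)$ and every neighborhood $V$ of $z_0$ there exist $U\in\mathcal{N}(x_0)$ and $z\in V$ with $z\in f(x)$ for all $x\in U$. *)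

(* Defs.v *)
From HB Require Import structures.
From mathcomp Require Import all_boot all_order all_algebra.
From mathcomp Require Import all_classical all_reals all_analysis.
Set Implicit Arguments. Unset Strict Implicit. Unset Printing Implicit Defensive.
Import Order.TTheory GRing.Theory Num.Theory.
Local Open Scope classical_set_scope.
Local Open Scope ring_scope.

(* Real topological vector spaces are modelled as
   [topologicalLmodType R] for [R : realType] (no Hausdorff / local convexity
   assumed). *)

Section Defs.
Variable R : realType.

Definition msum (Z : topologicalLmodType R) (A B : set Z) : set Z :=
  [set a + b | a in A & b in B].

Definition mscale (Z : topologicalLmodType R) (t : R) (A : set Z) : set Z :=
  [set t *: a | a in A].

Definition closed_convex_cone (Z : topologicalLmodType R) (C : set Z) : Prop :=
  [/\ C !=set0, closed C,
      (forall c t, C c -> 0 < t -> C (t *: c)) &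
      (forall c1 c2 t, C c1 -> C c2 -> 0 < t < 1 -> C (t *: c1 + (1 - t) *: c2))].

Definition topdual (Z : topologicalLmodType R) : set (Z -> R) :=
  [set g | (forall (a : R) (x y : Z), g (a *: x + y) = a * g x + g y)
           /\ continuous (g : Z -> R^o)].

Definition neg_dual_cone (Z : topologicalLmodType R) (C : set Z) : set (Z -> R) :=
  [set g | @topdual Z g /\ forall z, C z -> g z <= 0].

(* F(Z,C) = {A ⊆ Z | A = cl(A + C)}, empty set included *)
Definition FZC (Z : topologicalLmodType R) (C : set Z) : set (set Z) :=
  [set A | A = closure (msum A C)].

Definition sv_convex (X Z : topologicalLmodType R) (f : X -> set Z) : Prop :=
  forall x1 x2 (t : R), 0 < t < 1 ->
    msum (mscale t (f x1)) (mscale (1 - t) (f x2)) `<=` f (t *: x1 + (1 - t) *: x2).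

Definition lattice_bounded_above (X Z : topologicalLmodType R) (f : X -> set Z)
  (M : set X) : Prop :=
  exists a : Z, forall x, M x -> f x a.

Definition upper_lattice_sc (X Z : topologicalLmodType R) (f : X -> set Z) (x0 : X) : Prop :=
  f x0 `<=` closure (\bigcup_(U in [set U | nbhs x0 U]) \bigcap_(x in U) f x).

End Defs.

(* Main.v *)
Require Import Defs.
From HB Require Import structures.
From mathcomp Require Import all_boot all_order all_algebra.
From mathcomp Require Import all_classical all_reals all_analysis.
Import Order.TTheory GRing.Theory Num.Theory.
Local Open Scope classical_set_scope.
Local Open Scope ring_scope.

Lemma affine_cont (R : realType) (Z : topologicalLmodType R) (z w : Z) :
  continuous (fun t : R^o => z + t *: w).
Proof.
move=> t.
apply: (@continuous_comp _ _ _ (fun t : R^o => (z, t *: w)) (fun x : Z * Z => x.1 + x.2)); last exact: add_continuous.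
apply: (cvg_pair (cvg_cst z)).
apply: (@continuous_comp _ _ _ (fun t : R^o => (t, w)) (fun x : R^o * Z => x.1 *: x.2)); last exact: scale_continuous.
exact: (cvg_pair cvg_id (cvg_cst w)).
Qed.

Lemma affine_cont2 (R : realType) (X : topologicalLmodType R) (y : X) (c : R) :
  continuous (fun x : X => y + c *: (x - y)).
Proof.
move=> t.
apply: (@continuous_comp _ _ _ (fun x : X => (y, c *: (x - y))) (fun x : X * X => x.1 + x.2)); last exact: add_continuous.
apply: (cvg_pair (cvg_cst y)).
apply: (@continuous_comp _ _ _ (fun x : X => ((c : R^o), x - y)) (fun x : R^o * X => x.1 *: x.2)); last exact: scale_continuous.
apply: (cvg_pair (cvg_cst (c : R^o))).
apply: (@continuous_comp _ _ _ (fun x : X => (x, - y)) (fun x : X * X => x.1 + x.2)); last exact: add_continuous.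
exact: (cvg_pair cvg_id (cvg_cst (- y))).
Qed.

Theorem mainTheorem7 (R : realType) (X Z : topologicalLmodType R) (C : set Z)
  (f : X -> set Z) (x0 : X) :
  closed_convex_cone C ->
  neg_dual_cone C <> [set (fun _ : Z => 0 : R)] ->
  (forall x, FZC C (f x)) ->
  sv_convex f ->
  (exists U, nbhs x0 U /\ lattice_bounded_above f U) ->
  upper_lattice_sc f x0.
Proof.
move=> _ _ _ cvx [U0 [U0x0 [a Ha]]] z0 fz0 B Bz0.
have := @affine_cont R Z z0 (a - z0) 0.
rewrite /continuous_at scale0r addr0 => /(_ B Bz0).
move=> /nbhs_ballP [e /= e0 He].
set t : R := Num.min (e / 2) (2^-1).
have t0 : 0 < t by rewrite lt_min divr_gt0 //= invr_gt0.
have t1 : t < 1 by rewrite /t gt_min; apply/orP; right; rewrite invf_lt1 // ltr1n.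
have te : t < e by rewrite /t gt_min; apply/orP; left; rewrite ltr_pdivrMr // ltr_pMr // ltr1n.
clearbody t.
have Bz : B (z0 + t *: (a - z0)).
  apply: He; rewrite /ball /= sub0r normrN gtr0_norm //.
exists (z0 + t *: (a - z0)); split => //.
exists ((fun x => x0 + t^-1 *: (x - x0)) @^-1` U0).
  rewrite /=; have := @affine_cont2 R X x0 (t^-1) x0.
  by rewrite /continuous_at subrr scaler0 addr0 => /(_ U0 U0x0).
move=> x /= Ux.
have t01 : 0 < t < 1 by rewrite t0 t1.
have := cvx (x0 + t^-1 *: (x - x0)) x0 t t01.
have -> : t *: (x0 + t^-1 *: (x - x0)) + (1 - t) *: x0 = x.
  rewrite scalerDr scalerA mulfV ?gt_eqF // scale1r scalerBl scale1r.
  by rewrite addrC addrA subrK addrC subrK.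
apply; exists (t *: a); first by exists a => //; apply: Ha.
exists ((1 - t) *: z0); first by exists z0.
by rewrite scalerBr scalerBl scale1r addrCA.
Qed.
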